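(* The distribution of the rescaled magnetization under the Gibbs measure satisfies $$\mu_{N,\beta,\alpha}\Big(\sqrt{\tfrac{N}{s_N}}\,m\in\cdot\Big)\star\mathcal{N}(0,A^{-1})=z_N^{-1}\exp\Big\{-\tfrac{N}{s_N}\varphi_N\Big(\sqrt{\tfrac{s_N}{N}}\,x\Big)\Big\}\,\mathrm{d}^{s_N}x,$$ where $\star$ denotes convolution, $$\varphi_N(x)=\tfrac12x^TAx-\sum_{k=1}^{s_N}\log\cosh(x^TAe_k)=\tfrac{\beta}{2}\sum_{k}x_k^2+\tfrac{\alpha}{2}\sum_k x_k(x_{k-1}+x_{k+1})-\sum_k\log\cosh\big(\beta x_k+\alpha(x_{k-1}+x_{k+1})\big),$$ and $z_N=\int_{\mathbb{R}^{s_N}}\exp\{-\frac{N}{s_N}\varphi_N(\sqrt{s_N/N}\,x)\}\,\mathrm{d}^{s_N}x$.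
   Context: Parameters $\beta>2\alpha>0$. Let $(s_N)$ be a non-decreasing sequence of positive integers with $s_N$ dividing $N$; $\{1,\dots,N\}$ is partitioned into blocks $S_1,\dots,S_{s_N}$ of size $N/s_N$, block indices cyclic ($x_0=x_{s_N}$, $x_{s_N+1}=x_1$). For $\sigma\in\{-1,+1\}^N$, $m_k=\frac{s_N}{N}\sum_{i\in S_k}\sigma_i$, $m=(m_1,\dots,m_{s_N})$. $A=\beta I+\alpha(P+P^T)$ with $P$ the $s_N\times s_N$ cyclic shift matrix (positive definite since $\beta>2\alpha$), and $e_k$ the standard basis vectors of $\mathbb{R}^{s_N}$. The Gibbs measure is $\mu_{N,\beta,\alpha}(\sigma)=Z_{N,\beta,\alpha}^{-1}\exp\{\frac{N}{2s_N}m^TAm\}2^{-N}$ on $\{-1,+1\}^N$. *)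

(* Defs.v *)
From HB Require Import structures.
From mathcomp Require Import all_boot all_order all_algebra.
From mathcomp Require Import all_classical all_reals all_analysis.
Import Order.TTheory GRing.Theory Num.Theory.
Import numFieldNormedType.Exports.
Local Open Scope classical_set_scope.
Local Open Scope ring_scope.

Section Defs.
Variable R : realType.

(** Spin configurations sigma in {-1,+1}^N, encoded by booleans. *)
Definition spin (b : bool) : R := if b then 1 else -1.

Definition shiftP (s : nat) : 'M[R]_s := \matrix_(i, j) (j == ordS i)%:R.
Definition Amat (s : nat) (beta alpha : R) : 'M[R]_s :=
  beta%:M + alpha *: (shiftP s + (shiftP s)^T).

(** A point of R^s is an s-tuple (so that the product Borel sigma-algebra
    of the library is available); its row-vector view: *)
Definition vrow (s : nat) (x : s.-tuple R) : 'rV[R]_s := \row_i tnth x i.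
Definition tscale (s : nat) (c : R) (x : s.-tuple R) : s.-tuple R :=
  [tuple c * tnth x i | i < s].
Definition tadd (s : nat) (x y : s.-tuple R) : s.-tuple R :=
  [tuple tnth x i + tnth y i | i < s].

(** Block magnetization: block S_k = {i | i / (N/s) = k} (0-based). *)
Definition magn (N s : nat) (sigma : {ffun 'I_N -> bool}) : s.-tuple R :=
  [tuple (s%:R / N%:R) * \sum_(i < N | (i %/ (N %/ s))%N == k) spin (sigma i)
   | k < s].

Definition gibbs_weight (N s : nat) (beta alpha : R) (sigma : {ffun 'I_N -> bool}) : R :=
  let m := vrow s (magn N s sigma) in
  expR (N%:R / (2 * s%:R) * (m *m Amat s beta alpha *m m^T) 0 0) / 2 ^+ N.
Definition Zpart (N s : nat) (beta alpha : R) : R :=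
  \sum_(sigma : {ffun 'I_N -> bool}) gibbs_weight N s beta alpha sigma.
Definition gibbs (N s : nat) (beta alpha : R) (sigma : {ffun 'I_N -> bool}) : R :=
  gibbs_weight N s beta alpha sigma / Zpart N s beta alpha.

(** Integral over R^n of a [0,+oo]-valued function against Lebesgue measure,
    computed as an iterated integral of one-dimensional Lebesgue integrals
    (by Tonelli this is the integral against n-dimensional Lebesgue measure
    for nonnegative measurable integrands). *)
Fixpoint iint (n : nat) : (n.-tuple R -> \bar R) -> \bar R :=
  match n return (n.-tuple R -> \bar R) -> \bar R with
  | 0 => fun f => f [tuple]
  | n'.+1 => fun f =>
      (\int[@lebesgue_measure R]_t iint n' (fun x : n'.-tuple R => f (cons_tuple t x)))%E
  end.

Definition iint_on (n : nat) (B : set (n.-tuple R)) (f : n.-tuple R -> \bar R) : \bar R :=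
  iint n (fun x => if `[< B x >] then f x else 0%E).

Definition logcosh (u : R) : R := ln ((expR u + expR (- u)) / 2).

Definition phiN (s : nat) (beta alpha : R) (x : s.-tuple R) : R :=
  let v := vrow s x in let A := Amat s beta alpha in
  2^-1 * (v *m A *m v^T) 0 0 - \sum_(k < s) logcosh ((v *m A) 0 k).

Definition dens (N s : nat) (beta alpha : R) (x : s.-tuple R) : R :=
  expR (- (N%:R / s%:R) * phiN s beta alpha (tscale s (Num.sqrt (s%:R / N%:R)) x)).
Definition zN (N s : nat) (beta alpha : R) : \bar R :=
  iint s (fun x => (dens N s beta alpha x)%:E).

Definition gauss_density (s : nat) (A : 'M[R]_s) (x : s.-tuple R) : R :=
  Num.sqrt (\det A) / Num.sqrt ((2 * pi) ^+ s) *
  expR (- (2^-1 * (vrow s x *m A *m (vrow s x)^T) 0 0)).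
Definition gauss_meas (s : nat) (A : 'M[R]_s) (C : set (s.-tuple R)) : \bar R :=
  iint_on s C (fun x => (gauss_density s A x)%:E).

(** Law of sqrt(N/s) m under mu_{N,beta,alpha}, convolved with N(0,A^{-1}):
    (nu * rho)(B) = sum_sigma mu(sigma) rho(B - sqrt(N/s) m(sigma)). *)
Definition conv_law (N s : nat) (beta alpha : R) (B : set (s.-tuple R)) : \bar R :=
  (\sum_(sigma : {ffun 'I_N -> bool})
     (gibbs N s beta alpha sigma)%:E *
     gauss_meas s (Amat s beta alpha)
       [set x | B (tadd s (tscale s (Num.sqrt (N%:R / s%:R)) (magn N s sigma)) x)])%E.

End Defs.

(* Main.v *)
Require Import Defs.
From HB Require Import structures.
From mathcomp Require Import all_boot all_order all_algebra.
From mathcomp Require Import all_classical all_reals all_analysis.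
From mathcomp Require Import measurable_realfun.
From mathcomp Require Import ring lra.
Import Order.TTheory GRing.Theory Num.Theory.
Import numFieldNormedType.Exports.
Local Open Scope classical_set_scope.
Local Open Scope ring_scope.

Section IINT.
Variable R : realType.
Local Notation mu := (@lebesgue_measure R).
Local Open Scope ereal_scope.

Lemma iint_ext n (f g : n.-tuple R -> \bar R) :
  (forall x, f x = g x) -> iint R n f = iint R n g.
Proof.
elim: n f g => [|n IH] f g fg /=; first exact: fg.
by apply: eq_integral => t _; apply: IH => x; exact: fg.
Qed.

Lemma iint_ge0 n (f : n.-tuple R -> \bar R) :
  (forall x, 0 <= f x) -> 0 <= iint R n f.
Proof.
elim: n f => [|n IH] f f0 /=; first exact: f0.
by apply: integral_ge0 => t _; apply: IH => x; exact: f0.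
Qed.

Lemma measurable_iint n : forall d (Y : measurableType d)
  (f : Y * n.-tuple R -> \bar R), measurable_fun setT f ->
  (forall z, 0 <= f z) ->
  measurable_fun setT (fun y => iint R n (fun x => f (y, x))).
Proof.
elim: n => [|n IH] d Y f mf f0 /=.
  apply: measurableT_comp mf _.
  exact: measurable_fun_pair.
pose g : (Y * measurableTypeR R) * n.-tuple R -> \bar R :=
  fun p => f (p.1.1, cons_tuple p.1.2 p.2).
have mg : measurable_fun setT g.
  apply: measurableT_comp mf _ => /=.
  apply: measurable_fun_pair => /=.
    exact: measurableT_comp.
  apply: (@measurable_cons _ _ _ _ (fun p : (Y * measurableTypeR R) * n.-tuple R => (p.1.2 : R)) n snd).
    exact: measurableT_comp.
  exact: measurable_snd.
have := IH _ _ g mg (fun z => f0 _).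
move=> mG.
have H : measurable_fun setT (fubini_F mu (fun yt => iint R n (fun x => g (yt, x)))).
  apply: (@measurable_fun_fubini_tonelli_F _ _ _ _ R mu _ mG).
  by move=> z; apply: iint_ge0 => x; exact: f0.
exact: H.
Qed.

Lemma measurable_iint_cons n (F : n.+1.-tuple R -> \bar R) :
  measurable_fun setT F -> (forall x, 0 <= F x) ->
  measurable_fun (setT : set (measurableTypeR R))
    (fun t => iint R n (fun x => F (cons_tuple t x))).
Proof.
move=> mF F0.
apply: (@measurable_iint n _ (measurableTypeR R)
  (fun p : measurableTypeR R * n.-tuple R => F (cons_tuple p.1 p.2))).
  apply: measurableT_comp mF _.
  apply: (@measurable_cons _ _ _ _ (fun p : measurableTypeR R * n.-tuple R => (p.1 : R)) n snd).
    exact: measurable_fst.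
  exact: measurable_snd.
by move=> z; exact: F0.
Qed.

Lemma measurable_cons_r n (F : n.+1.-tuple R -> \bar R) (t : R) :
  measurable_fun setT F -> measurable_fun setT (fun x : n.-tuple R => F (cons_tuple t x)).
Proof.
move=> mF; apply: measurableT_comp mF _.
apply: (@measurable_cons _ _ _ _ (fun _ : n.-tuple R => t) n id).
  exact: measurable_cst.
exact: measurable_id.
Qed.

Lemma iint_sum n (I : Type) (r : seq I) (f : I -> n.-tuple R -> \bar R) :
  (forall i, measurable_fun setT (f i)) -> (forall i x, 0 <= f i x) ->
  iint R n (fun x => \sum_(i <- r) f i x) = \sum_(i <- r) iint R n (f i).
Proof.
elim: n f => [|n IH] f mf f0 //=.
transitivity (\int[mu]_t \sum_(i <- r) iint R n (fun x => f i (cons_tuple t x))).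
  apply: eq_integral => t _.
  apply: (IH (fun i x => f i (cons_tuple t x))).
    by move=> i; exact: measurable_cons_r.
  by move=> i x; exact: f0.
apply: ge0_integral_sum => //.
  by move=> i; apply: measurable_iint_cons => //; exact: f0.
by move=> i t _; apply: iint_ge0 => x; exact: f0.
Qed.

Lemma iintZl n (k : \bar R) (f : n.-tuple R -> \bar R) :
  measurable_fun setT f -> (forall x, 0 <= f x) -> 0 <= k ->
  iint R n (fun x => k * f x) = k * iint R n f.
Proof.
elim: n f => [|n IH] f mf f0 k0 //=.
transitivity (\int[mu]_t (k * iint R n (fun x => f (cons_tuple t x)))).
  apply: eq_integral => t _.
  apply: (IH (fun x => f (cons_tuple t x))) => //.
  exact: measurable_cons_r.
apply: ge0_integralZl => //.
  by apply: measurable_iint_cons.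
by move=> t _; apply: iint_ge0.
Qed.
Lemma shift_meas (a : R) (A : set (measurableTypeR R)) : measurable A ->
  mu A = pushforward mu (fun t : measurableTypeR R => (a + t)%R : measurableTypeR R) A.
Proof.
move=> mA.
have mphi : measurable_fun setT (fun t : measurableTypeR R => (a + t)%R : measurableTypeR R).
  by apply: measurable_funD.
apply: lebesgue_measure_unique => //= _ [[c e]] _ <-.
rewrite /pushforward.
have -> : (fun t : measurableTypeR R => (a + t)%R) @^-1` `]c, e]%classic = `](c - a)%R, (e - a)%R]%classic.
  by apply/seteqP; split => x /=; move=> /= h; rewrite (@in_itv _ R) /=; move: h; rewrite (@in_itv _ R) /= => /andP[h1 h2]; apply/andP; split; lra.
rewrite !lebesgue_measure_itv /= !lte_fin ltrD2r.
by case: ifP => // _; rewrite -!EFinD; congr (_%:E); ring.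
Qed.

Lemma integral_shift (a : R) (h : measurableTypeR R -> \bar R) :
  measurable_fun setT h -> (forall t, 0 <= h t) ->
  \int[mu]_t h (a + t)%R = \int[mu]_t h t.
Proof.
move=> mh h0.
have mphi : measurable_fun setT (fun t : measurableTypeR R => (a + t)%R : measurableTypeR R).
  by apply: measurable_funD.
rewrite [RHS](eq_measure_integral (pushforward mu (fun t : measurableTypeR R => (a + t)%R : measurableTypeR R))); last first.
  by move=> A mA _; exact: shift_meas.
rewrite ge0_integral_pushforward // preimage_setT.
Qed.

Lemma tadd_cons n (y0 t : R) (y x : n.-tuple R) :
  tadd R n.+1 (cons_tuple y0 y) (cons_tuple t x) = cons_tuple (y0 + t)%R (tadd R n y x).
Proof.
apply: eq_from_tnth => i; rewrite /tadd tnth_mktuple.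
case: (unliftP ord0 i) => [j ->|->].
  by rewrite !tnthS tnth_mktuple.
by rewrite !tnth0.
Qed.

Lemma iint_shift n (y : n.-tuple R) (f : n.-tuple R -> \bar R) :
  measurable_fun setT f -> (forall x, 0 <= f x) ->
  iint R n (fun x => f (tadd R n y x)) = iint R n f.
Proof.
elim: n y f => [|n IH] y f mf f0 /=.
  by rewrite (tuple0 (tadd R 0 y [tuple])).
case/tupleP: y => y0 y.
transitivity (\int[mu]_t iint R n (fun x => f (cons_tuple (y0 + t)%R x))).
  apply: eq_integral => t _.
  under iint_ext do rewrite tadd_cons.
  apply: (IH y (fun x => f (cons_tuple (y0 + t)%R x))) => //.
  exact: measurable_cons_r.
apply: (integral_shift y0 (fun u => iint R n (fun x => f (cons_tuple u x)))).
  exact: measurable_iint_cons.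
by move=> u; apply: iint_ge0.
Qed.

Definition trc n (x : n.-tuple R) (t : R) : n.+1.-tuple R := [tuple of rcons x t].

Lemma iint_rcons n (f : n.+1.-tuple R -> \bar R) :
  iint R n.+1 f = iint R n (fun x => \int[mu]_t f (trc n x t)).
Proof.
elim: n f => [|n IH] f.
  by apply: eq_integral => t _; congr f; exact: val_inj.
change (\int[mu]_t1 iint R n.+1 (fun x => f (cons_tuple t1 x)) = \int[mu]_t1 iint R n (fun x => \int[mu]_t f (trc n.+1 (cons_tuple t1 x) t))).
apply: eq_integral => t1 _.
rewrite IH; apply: iint_ext => x.
apply: eq_integral => t _; congr f; exact: val_inj.
Qed.
End IINT.

Set Implicit Arguments.
Unset Strict Implicit.
Section QF.
Variable R : realType.

Definition qf n (A : 'M[R]_n) (x : n.-tuple R) : R :=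
  (vrow R n x *m A *m (vrow R n x)^T) 0 0.

Lemma qfE n (A : 'M[R]_n) x :
  qf A x = \sum_i \sum_j tnth x i * A i j * tnth x j.
Proof.
rewrite /qf mxE.
under eq_bigr do rewrite !mxE big_distrl /=.
rewrite exchange_big; apply: eq_bigr => i _; apply: eq_bigr => j _.
by rewrite !mxE.
Qed.

Lemma measurable_qf n (A : 'M[R]_n) : measurable_fun setT (qf A).
Proof.
rewrite (_ : qf A = fun x => \sum_i \sum_j tnth x i * A i j * tnth x j); last first.
  by apply/funext => x; exact: qfE.
apply: measurable_sum => i; apply: measurable_sum => j.
apply: measurable_funM; last exact: measurable_tnth.
apply: measurable_funM; last exact: measurable_cst.
exact: measurable_tnth.
Qed.

Section Step.
Variable n : nat.
Variable A : 'M[R]_n.+1.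
Hypothesis symA : A^T = A.
Let w (i : 'I_n) : 'I_n.+1 := widen_ord (leqnSn n) i.
Definition aa := A ord_max ord_max.
Definition bv (i : 'I_n) := A (widen_ord (leqnSn n) i) ord_max.
Definition A1 : 'M[R]_n := \matrix_(i, j) A (widen_ord (leqnSn n) i) (widen_ord (leqnSn n) j).
Definition Sc : 'M[R]_n := \matrix_(i, j) (A1 i j - bv i * bv j / aa).
Definition bx (x : n.-tuple R) := \sum_i bv i * tnth x i.

Lemma Asym i j : A i j = A j i.
Proof. by rewrite -[in LHS]symA mxE. Qed.

Lemma tnth_trc_w x t i : tnth (trc R n x t) (widen_ord (leqnSn n) i) = tnth x i.
Proof.
rewrite (tnth_nth 0) (tnth_nth 0) /= nth_rcons size_tuple /=.
by rewrite ltn_ord.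
Qed.

Lemma tnth_trc_max x t : tnth (trc R n x t) ord_max = t.
Proof.
by rewrite (tnth_nth 0) /= nth_rcons size_tuple ltnn eqxx.
Qed.

Lemma qf_trc x t : qf A (trc R n x t) = qf A1 x + 2 * t * bx x + aa * t ^+ 2.
Proof.
rewrite !qfE big_ord_recr /=.
under eq_bigr do rewrite big_ord_recr /=.
rewrite big_ord_recr /= big_split /=.
rewrite !tnth_trc_max.
under eq_bigr do rewrite !tnth_trc_w.
under [X in _ + X + _ = _]eq_bigr do rewrite !tnth_trc_w.
under [X in _ + _ + (X + _) = _]eq_bigr do rewrite !tnth_trc_w.
have -> : \sum_(i < n) \sum_(j < n) tnth x i * A (widen_ord (leqnSn n) i) (widen_ord (leqnSn n) j) * tnth (trc R n x t) (widen_ord (leqnSn n) j)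
   = \sum_(i < n) \sum_(j < n) tnth x i * A1 i j * tnth x j.
  by apply: eq_bigr => i _; apply: eq_bigr => j _; rewrite mxE tnth_trc_w.
have E1 : \sum_(i < n) tnth x i * A (widen_ord (leqnSn n) i) ord_max * t = t * bx x.
  rewrite /bx mulr_sumr; apply: eq_bigr => i _; rewrite /bv; ring.
have E2 : \sum_(i < n) t * A ord_max (widen_ord (leqnSn n) i) * tnth x i = t * bx x.
  rewrite /bx mulr_sumr; apply: eq_bigr => i _; rewrite /bv Asym; ring.
rewrite E1 E2 /aa; ring.
Qed.

Lemma qf_Sc x : qf Sc x = qf A1 x - bx x ^+ 2 / aa.
Proof.
rewrite !qfE.
transitivity (\sum_i \sum_j (tnth x i * A1 i j * tnth x j - (bv i * tnth x i) * (bv j * tnth x j) / aa)).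
  by apply: eq_bigr => i _; apply: eq_bigr => j _; rewrite !mxE; ring.
under eq_bigr do rewrite sumrB.
rewrite sumrB; congr (_ - _).
rewrite /bx expr2 big_distrl /= big_distrl /=; apply: eq_bigr => i _.
rewrite big_distrr /= big_distrl /=; apply: eq_bigr => j _; ring.
Qed.

Lemma det_Sc : aa != 0 -> \det A = aa * \det Sc.
Proof.
move=> a0.
pose c (i : 'I_n.+1) := if i == ord_max then 0 else A i ord_max / aa.
pose L : 'M[R]_n.+1 := 1%:M - \matrix_(i, j) ((j == ord_max)%:R * c i).
have detL : \det L = 1.
  rewrite -det_tr det_trig.
    apply: big1 => i _; rewrite !mxE eqxx /c.
    by case: (i == ord_max); rewrite /= ?mulr0 ?mul0r subr0.
  apply/is_trig_mxP => i j lt_ij; rewrite !mxE.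
  have -> : (j == i) = false by apply/negbTE; rewrite neq_ltn lt_ij orbT.
  have -> : (i == ord_max) = false.
    apply/negbTE; rewrite neq_ltn; apply/orP; left.
    by apply: (leq_trans lt_ij); rewrite -ltnS.
  by rewrite mul0r subr0.
have -> : \det A = \det (L *m A) by rewrite det_mulmx detL mul1r.
rewrite (expand_det_col _ ord_max) (bigD1 ord_max) //= big1 ?addr0; last first.
  move=> i ni; rewrite mulmxBl mul1mx !mxE.
  rewrite (bigD1 ord_max) //= big1 ?addr0; last first.
    by move=> k nk; rewrite !mxE (negbTE nk) mul0r mul0r.
  rewrite !mxE eqxx mul1r /c (negbTE ni) /aa divfK // subrr mul0r //.
rewrite mulmxBl mul1mx !mxE.
rewrite (bigD1 ord_max) //= big1 ?addr0; last first.
  by move=> k nk; rewrite !mxE (negbTE nk) mul0r mul0r.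
rewrite !mxE eqxx mul1r /c eqxx mul0r subr0.
rewrite /cofactor.
have -> : (-1) ^+ (@ord_max n + @ord_max n)%N = 1 :> R by rewrite -signr_odd addnn odd_double.
rewrite mul1r.
congr (_ * \det _).
apply/matrixP => i j; rewrite !mxE.
rewrite (bigD1 ord_max) //= big1 ?addr0; last first.
  by move=> k nk; rewrite !mxE (negbTE nk) mul0r mul0r.
rewrite !mxE eqxx mul1r /c.
have -> : (lift ord_max i == ord_max) = false by apply/negbTE; rewrite eq_sym neq_lift.
have Li : lift ord_max i = widen_ord (leqnSn n) i by apply: val_inj; exact: lift_max.
have Lj : lift ord_max j = widen_ord (leqnSn n) j by apply: val_inj; exact: lift_max.
rewrite Li Lj /bv (Asym ord_max); ring.
Qed.
End Step.

Local Notation mu := (@lebesgue_measure R).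
Lemma gauss1 (a q m : R) : 0 < a ->
  (\int[mu]_t (expR (- (2^-1 * (a * (t - m) ^+ 2 + q))))%:E =
  (expR (- (2^-1 * q)) * Num.sqrt (2 * pi / a))%:E)%E.
Proof.
move=> a0.
set s := (Num.sqrt a)^-1.
have s0 : s != 0 by rewrite invr_eq0 gt_eqF // sqrtr_gt0.
have s2 : s ^+ 2 = a^-1 by rewrite exprVn sqr_sqrtr // ltW.
set K := expR (- (2^-1 * q)) * Num.sqrt (2 * pi / a).
have E : forall t : R, expR (- (2^-1 * (a * (t - m) ^+ 2 + q))) = K * normal_pdf m s t.
  move=> t; rewrite /normal_pdf (negbTE s0) /normal_peak /normal_fun s2 /K.
  have -> : a^-1 * pi *+ 2 = 2 * pi / a by rewrite -mulr_natr; field; rewrite gt_eqF.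
  have sp : Num.sqrt (2 * pi / a) != 0.
    by rewrite gt_eqF // sqrtr_gt0 divr_gt0 // mulr_gt0 // pi_gt0.
  rewrite -mulrA (mulrA (Num.sqrt _)) mulfV // mul1r -expRD; congr expR.
  field; rewrite gt_eqF //.
under eq_integral do rewrite E EFinM.
rewrite ge0_integralZl //.
- by rewrite integral_normal_pdf mule1.
- apply/measurable_EFinP; exact: measurable_normal_pdf.
- by move=> t _; rewrite lee_fin normal_pdf_ge0.
- by rewrite lee_fin /K mulr_ge0 // ?expR_ge0 ?sqrtr_ge0.
Qed.

Definition PD n (A : 'M[R]_n) := forall x : n.-tuple R, (forall i, tnth x i = 0) \/ 0 < qf A x.

Lemma qf0 n (A : 'M[R]_n) : qf A [tuple (0:R) | _ < n] = 0.
Proof. by rewrite qfE big1 // => i _; rewrite big1 // => j _; rewrite tnth_mktuple !mul0r. Qed.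

Lemma aa_gt0 n (A : 'M[R]_n.+1) : A^T = A -> PD A -> 0 < aa A.
Proof.
move=> sA pA.
case: (pA (trc R n [tuple (0:R) | _ < n] 1)) => [/(_ ord_max)|].
  by rewrite tnth_trc_max => /eqP; rewrite oner_eq0.
rewrite qf_trc // qf0 /bx big1 ?mulr0 ?add0r ?expr1n ?mulr1 //.
by move=> i _; rewrite tnth_mktuple mulr0.
Qed.

Lemma PD_Sc n (A : 'M[R]_n.+1) : A^T = A -> PD A -> PD (Sc A).
Proof.
move=> sA pA x.
have a0 := aa_gt0 sA pA.
case: (pA (trc R n x (- bx A x / aa A))) => [H|H].
  by left => i; rewrite -(tnth_trc_w x (- bx A x / aa A)) H.
right; move: H; rewrite qf_trc // qf_Sc.
have -> : qf (A1 A) x + 2 * (- bx A x / aa A) * bx A x + aa A * (- bx A x / aa A) ^+ 2 =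
   qf (A1 A) x - bx A x ^+ 2 / aa A by field; rewrite gt_eqF.
by [].
Qed.

Lemma sym_Sc n (A : 'M[R]_n.+1) : A^T = A -> (Sc A)^T = Sc A.
Proof.
move=> sA; apply/matrixP => i j; rewrite !mxE (Asym sA (widen_ord _ i)); ring.
Qed.

Lemma measurable_eqf n (A : 'M[R]_n) :
  measurable_fun setT (fun x => (expR (- (2^-1 * qf A x)))%:E).
Proof.
apply/measurable_EFinP; apply: measurableT_comp => //.
apply: measurableT_comp => //.
apply: measurable_funM => //; exact: measurable_qf.
Qed.

Theorem gauss_int n (A : 'M[R]_n) : A^T = A -> PD A ->
  0 < \det A /\
  iint R n (fun x => (expR (- (2^-1 * qf A x)))%:E) =
  (Num.sqrt ((2 * pi) ^+ n) / Num.sqrt (\det A))%:E.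
Proof.
elim: n A => [|n IH] A sA pA.
  rewrite det_mx00 /=; split => //.
  rewrite (_ : qf A [tuple] = 0); last by rewrite qfE big_ord0.
  by rewrite mulr0 oppr0 expR0 expr0 sqrtr1 divr1.
have a0 := aa_gt0 sA pA.
have [dS IS] := IH _ (sym_Sc sA) (PD_Sc sA pA).
have dA : \det A = aa A * \det (Sc A) by apply: det_Sc => //; rewrite gt_eqF.
split; first by rewrite dA mulr_gt0.
rewrite iint_rcons.
transitivity (iint R n (fun x => (Num.sqrt (2 * pi / aa A))%:E * (expR (- (2^-1 * qf (Sc A) x)))%:E)%E).
  apply: iint_ext => x.
  transitivity (\int[mu]_t (expR (- (2^-1 * (aa A * (t - (- bx A x / aa A)) ^+ 2 + qf (Sc A) x))))%:E)%E.
    apply: eq_integral => t _; rewrite qf_trc // qf_Sc; congr (expR _)%:E.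
    by congr (- (_ * _)); field; rewrite gt_eqF.
  by rewrite gauss1 // EFinM muleC.
rewrite iintZl; [|exact: measurable_eqf|by move=> x; rewrite lee_fin expR_ge0|by rewrite lee_fin sqrtr_ge0].
rewrite IS -EFinM dA; congr (_%:E).
have p0 : 0 < 2 * pi :> R by rewrite mulr_gt0 // pi_gt0.
rewrite exprSr !sqrtrM ?exprn_ge0 ?ltW // ?mulr_ge0 ?ltW //.
rewrite sqrtrV ?invr_ge0 ?ltW //.
have : 0 < Num.sqrt (aa A) by rewrite sqrtr_gt0.
have : 0 < Num.sqrt (\det (Sc A)) by rewrite sqrtr_gt0.
move=> h1 h2; field; rewrite !gt_eqF //.
Qed.
End QF.

Set Implicit Arguments.
Unset Strict Implicit.
Section AM.
Variable R : realType.

Lemma Amat_entry s (beta alpha : R) (i j : 'I_s) :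
  Amat R s beta alpha i j = beta * (j == i)%:R + alpha * ((j == ordS i)%:R + (i == ordS j)%:R).
Proof. by rewrite /Amat /shiftP !mxE mulr_natr eq_sym. Qed.

Lemma Amat_sym s (beta alpha : R) : (Amat R s beta alpha)^T = Amat R s beta alpha.
Proof.
apply/matrixP => i j; rewrite mxE !Amat_entry eq_sym; congr (_ + _ * _).
by rewrite addrC.
Qed.

Lemma sum_delta n (f : 'I_n -> R) k : \sum_j f j * (j == k)%:R = f k.
Proof.
rewrite (bigD1 k) //= eqxx mulr1 big1 ?addr0 // => j /negbTE ->.
by rewrite mulr0.
Qed.

Lemma qf_Amat s (beta alpha : R) (x : s.-tuple R) :
  qf (Amat R s beta alpha) x =
  beta * \sum_i tnth x i ^+ 2 + 2 * alpha * \sum_i tnth x i * tnth x (ordS i).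
Proof.
rewrite qfE.
transitivity (\sum_i \sum_j (beta * (tnth x i * tnth x j) * (j == i)%:R
   + alpha * (tnth x i * tnth x j) * (j == ordS i)%:R
   + alpha * (tnth x i * tnth x j) * (i == ordS j)%:R)).
  by apply: eq_bigr => i _; apply: eq_bigr => j _; rewrite Amat_entry; ring.
under eq_bigr do rewrite !big_split /= !sum_delta.
rewrite !big_split /=.
rewrite [X in _ + _ + X = _]exchange_big /=.
under [X in _ + _ + X = _]eq_bigr do rewrite sum_delta.
rewrite !mulr_sumr -!big_split /=; apply: eq_bigr => i _; ring.
Qed.

Lemma sum_ordS s (f : 'I_s -> R) : \sum_i f (ordS i) = \sum_i f i.
Proof. by rewrite [RHS](reindex_inj (@ordS_inj s)). Qed.

Lemma Amat_PD s (beta alpha : R) : 0 < alpha -> 2 * alpha < beta -> PD (Amat R s beta alpha).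
Proof.
move=> a0 ab x.
have [H|H] := boolP [forall i, tnth x i == 0].
  by left => i; apply/eqP; move/forallP: H; apply.
right; move/forallP: H => /= /existsNP [i /eqP xi].
rewrite qf_Amat.
set S2 := \sum_i tnth x i ^+ 2.
have S2pos : 0 < S2.
  rewrite /S2 (bigD1 i) //=.
  have h1 : 0 <= \sum_(j < s | j != i) tnth x j ^+ 2 by apply: sumr_ge0 => j _; exact: sqr_ge0.
  have xi' : tnth x i != 0 by move: xi; case: (tnth x i == 0).
  have h2 : 0 < tnth x i ^+ 2 by rewrite exprn_even_gt0.
  lra.
have C : - S2 <= \sum_i tnth x i * tnth x (ordS i).
  have : \sum_i (- (tnth x i ^+ 2 + tnth x (ordS i) ^+ 2) / 2) <= \sum_i tnth x i * tnth x (ordS i).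
    apply: ler_sum => j _.
    have := sqr_ge0 (tnth x j + tnth x (ordS j)); lra.
  have E : \sum_i (- (tnth x i ^+ 2 + tnth x (ordS i) ^+ 2) / 2) = - S2.
    rewrite (eq_bigr (fun j => (- (tnth x j ^+ 2) / 2) + (- (tnth x (ordS j) ^+ 2) / 2))); last by move=> j _; ring.
    rewrite big_split /= (sum_ordS (fun j => - (tnth x j ^+ 2) / 2)) -big_split /= /S2 -sumrN.
    by apply: eq_bigr => j _; field.
  by rewrite E.
nra.
Qed.
End AM.

Set Implicit Arguments.
Unset Strict Implicit.
Section ALG.
Variable R : realType.

Lemma prod_blocks (m d : nat) (F : nat -> R) : (0 < d)%N ->
  \prod_(i < m * d) F (i %/ d)%N = \prod_(k < m) F k ^+ d.
Proof.
move=> d0; rewrite -(big_mkord xpredT (fun i => F (i %/ d)%N)) -(big_mkord xpredT (fun k => F k ^+ d)).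
elim: m => [|m IH]; first by rewrite mul0n !big_geq.
rewrite mulSn addnC (big_cat_nat _ (leq_addr _ _)) //= IH big_nat_recr //=.
congr (_ * _).
rewrite (eq_big_nat _ _ (F2 := fun _ => F m)); last first.
  move=> i /andP[h1 h2]; congr F.
  rewrite -(subnK h1) addnC divnMDl // divn_small ?addn0 //.
  by rewrite ltn_subLR.
by rewrite prodr_const_nat addKn.
Qed.

Definition tsub n (x y : n.-tuple R) : n.-tuple R := [tuple tnth x i - tnth y i | i < n].

Lemma tsub_tadd n (x y : n.-tuple R) : tsub (tadd R n y x) y = x.
Proof. by apply: eq_from_tnth => i; rewrite !tnth_mktuple; ring. Qed.


Definition bil n (A : 'M[R]_n) (x y : n.-tuple R) := \sum_i \sum_j tnth x i * A i j * tnth y j.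

Lemma qf_tsub n (A : 'M[R]_n) x y : A^T = A ->
  qf A (tsub x y) = qf A x - 2 * bil A x y + qf A y.
Proof.
move=> sA; rewrite !qfE /bil.
have Aji : forall i j, A j i = A i j by move=> i j; rewrite -[in LHS]sA mxE.
have E : \sum_i \sum_j tnth y i * A i j * tnth x j = \sum_i \sum_j tnth x i * A i j * tnth y j.
  rewrite exchange_big; apply: eq_bigr => i _; apply: eq_bigr => j _.
  by rewrite Aji; ring.
transitivity (\sum_i \sum_j (tnth x i * A i j * tnth x j - tnth x i * A i j * tnth y j
   - tnth y i * A i j * tnth x j + tnth y i * A i j * tnth y j)).
  by apply: eq_bigr => i _; apply: eq_bigr => j _; rewrite !tnth_mktuple; ring.
under eq_bigr do rewrite !(big_split, sumrN) /=.
rewrite !(big_split, sumrN) /= E; ring.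
Qed.

Lemma qf_tscale n (A : 'M[R]_n) c x : qf A (tscale R n c x) = c ^+ 2 * qf A x.
Proof.
rewrite !qfE mulr_sumr; apply: eq_bigr => i _; rewrite mulr_sumr; apply: eq_bigr => j _.
by rewrite !tnth_mktuple; ring.
Qed.

Definition uu n (A : 'M[R]_n) (x : n.-tuple R) (k : 'I_n) := \sum_i tnth x i * A i k.

Lemma bil_uu n (A : 'M[R]_n) x v : bil A x v = \sum_k uu A x k * tnth v k.
Proof.
rewrite /bil exchange_big; apply: eq_bigr => k _; rewrite /uu big_distrl //.
Qed.

Lemma uu_vrow n (A : 'M[R]_n) x k : (vrow R n x *m A) 0 k = uu A x k.
Proof. by rewrite mxE; apply: eq_bigr => i _; rewrite mxE. Qed.

Lemma uu_tscale n (A : 'M[R]_n) c x k : uu A (tscale R n c x) k = c * uu A x k.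
Proof. by rewrite /uu mulr_sumr; apply: eq_bigr => i _; rewrite tnth_mktuple mulrA. Qed.
End ALG.

Section HS.
Variables (R : realType) (beta alpha : R) (N s : nat).
Hypotheses (N0 : (0 < N)%N) (s0 : (0 < s)%N) (sdN : (s %| N)%N).
Local Notation d := (N %/ s)%N.
Local Notation A := (Amat R s beta alpha).

Lemma Nsd : N = (s * d)%N.
Proof. by rewrite mulnC divnK. Qed.

Lemma d0 : (0 < d)%N.
Proof. by rewrite divn_gt0 // dvdn_leq. Qed.

Lemma blk_proof (i : 'I_N) : (i %/ d < s)%N.
Proof. by rewrite ltn_divLR ?d0 // -Nsd. Qed.

Definition blk (i : 'I_N) : 'I_s := Ordinal (blk_proof i).

Lemma sum_blocks (u : 'I_s -> R) (a : 'I_N -> R) :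
  \sum_(k < s) u k * \sum_(i < N | (i %/ d)%N == k) a i = \sum_(i < N) u (blk i) * a i.
Proof.
under eq_bigr do rewrite big_distrr /= big_mkcond /=.
rewrite exchange_big; apply: eq_bigr => i _.
rewrite (bigD1 (blk i)) //= eqxx big1 ?addr0 // => k nk.
case: eqP => // E; case/negP: nk; apply/eqP/val_inj => /=; by rewrite E.
Qed.

Lemma prod_blk (F : 'I_s -> R) : \prod_(i < N) F (blk i) = \prod_(k < s) F k ^+ d.
Proof.
pose x0 : 'I_s := Ordinal s0.
pose G (k : nat) := F (insubd x0 k).
transitivity (\prod_(i < N) G (i %/ d)%N).
  apply: eq_bigr => i _; rewrite /G; congr F; apply: val_inj.
  by rewrite val_insubd /= blk_proof.
have H : \prod_(i < s * d) G (i %/ d)%N = \prod_(k < s) G k ^+ d by apply: prod_blocks; exact: d0.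
rewrite -Nsd in H; rewrite H.
by apply: eq_bigr => k _; rewrite /G valKd.
Qed.

Lemma sum_spin (a : 'I_N -> R) :
  \sum_(sg : {ffun 'I_N -> bool}) expR (\sum_i a i * spin R (sg i)) =
  \prod_i (expR (a i) + expR (- a i)).
Proof.
rewrite (eq_bigr (fun sg : {ffun 'I_N -> bool} => \prod_i expR (a i * spin R (sg i)))); last by move=> sg _; rewrite expR_sum.
rewrite -(bigA_distr_bigA (fun i b => expR (a i * spin R b))).
by apply: eq_bigr => i _; rewrite big_bool /= /spin mulr1 mulrN1.
Qed.

Lemma sNpos : 0 < s%:R :> R. Proof. by rewrite ltr0n. Qed.
Lemma NNpos : 0 < N%:R :> R. Proof. by rewrite ltr0n. Qed.

Definition cc : R := Num.sqrt (N%:R / s%:R).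
Definition rr : R := Num.sqrt (s%:R / N%:R).

Lemma cc_gt0 : 0 < cc.
Proof. by rewrite sqrtr_gt0 divr_gt0 // ?sNpos ?NNpos. Qed.

Lemma cc2 : cc ^+ 2 = N%:R / s%:R.
Proof. by rewrite sqr_sqrtr // ltW // divr_gt0 // ?sNpos ?NNpos. Qed.

Lemma rrE : rr = cc^-1.
Proof. by rewrite /rr /cc -invf_div sqrtrV // ltW // divr_gt0 // ?sNpos ?NNpos. Qed.

Lemma Nsd_R : N%:R / s%:R = d%:R :> R.
Proof.
have -> : N%:R = s%:R * d%:R :> R by rewrite -natrM -Nsd.
by rewrite mulrAC mulfV ?mul1r // gt_eqF // sNpos.
Qed.

Lemma bil_y x (sg : {ffun 'I_N -> bool}) :
  bil A x (tscale R s cc (magn R N s sg)) = \sum_(i < N) (rr * uu A x (blk i)) * spin R (sg i).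
Proof.
rewrite bil_uu -(sum_blocks (fun k => rr * uu A x k) (fun i => spin R (sg i))); apply: eq_bigr => k _.
rewrite !tnth_mktuple rrE -(invf_div (N%:R) (s%:R)) -cc2.
have h1 := cc_gt0; by field; rewrite gt_eqF.
Qed.

Definition yy (sg : {ffun 'I_N -> bool}) := tscale R s cc (magn R N s sg).

Lemma gw_eq sg : gibbs_weight R N s beta alpha sg =
  expR (N%:R / (2 * s%:R) * qf A (magn R N s sg)) / 2 ^+ N.
Proof. by []. Qed.

Lemma L3 x sg : gibbs_weight R N s beta alpha sg * expR (- (2^-1 * qf A (tsub x (yy sg)))) =
  expR (- (2^-1 * qf A x)) * expR (bil A x (yy sg)) / 2 ^+ N.
Proof.
rewrite gw_eq /yy qf_tsub ?Amat_sym // qf_tscale cc2.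
rewrite mulrAC -expRD -expRD; congr (expR _ / _).
have := sNpos; move=> h; by field; rewrite gt_eqF.
Qed.

Definition chh (u : R) := (expR u + expR (- u)) / 2.

Lemma rr2 : rr ^+ 2 = s%:R / N%:R.
Proof. by rewrite sqr_sqrtr // ltW // divr_gt0 // ?sNpos ?NNpos. Qed.

Lemma dens_eq x : dens R N s beta alpha x =
  expR (- (2^-1 * qf A x)) * \prod_k chh (rr * uu A x k) ^+ d.
Proof.
have phiE : forall v, phiN R s beta alpha v = 2^-1 * qf A v - \sum_k logcosh R (uu A v k).
  by move=> v; rewrite /phiN /=; congr (_ - _); apply: eq_bigr => k _; rewrite uu_vrow.
rewrite /dens phiE qf_tscale.
rewrite -[Num.sqrt (s%:R / N%:R)]/rr.
rewrite (eq_bigr (fun k => logcosh R (rr * uu A x k))); last by move=> k _; rewrite uu_tscale.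
set L := \sum_k _.
have -> : - (N%:R / s%:R) * (2^-1 * (rr ^+ 2 * qf A x) - L) = - (2^-1 * qf A x) + d%:R * L.
  rewrite -Nsd_R rr2; have := sNpos; have := NNpos => h1 h2; field.
  by rewrite !gt_eqF.
rewrite expRD expRM_natl expR_sum prodrXl; congr (_ * _ ^+ _).
apply: eq_bigr => k _; rewrite /logcosh lnK //.
by rewrite posrE divr_gt0 // addr_gt0 // expR_gt0.
Qed.

Definition KK := Num.sqrt (\det A) / Num.sqrt ((2 * pi) ^+ s).

Lemma gd_eq z : gauss_density R s A z = KK * expR (- (2^-1 * qf A z)).
Proof. by []. Qed.

Definition GG x := \sum_(sg : {ffun 'I_N -> bool})
  gibbs R N s beta alpha sg * gauss_density R s A (tsub x (yy sg)).

Lemma GG_eq x : GG x = KK / Zpart R N s beta alpha * dens R N s beta alpha x.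
Proof.
rewrite /GG /gibbs.
transitivity (KK / Zpart R N s beta alpha * \sum_(sg : {ffun 'I_N -> bool})
   (gibbs_weight R N s beta alpha sg * expR (- (2^-1 * qf A (tsub x (yy sg)))))).
  by rewrite mulr_sumr; apply: eq_bigr => sg _; rewrite gd_eq; ring.
under eq_bigr do rewrite L3.
transitivity (KK / Zpart R N s beta alpha * (expR (- (2^-1 * qf A x)) / 2 ^+ N *
  \sum_(sg : {ffun 'I_N -> bool}) expR (bil A x (yy sg)))).
  by congr (_ * _); rewrite mulr_sumr; apply: eq_bigr => sg _; ring.
under eq_bigr do rewrite /yy bil_y.
rewrite sum_spin.
have -> : \prod_(i < N) (expR (rr * uu A x (blk i)) + expR (- (rr * uu A x (blk i)))) =
   \prod_(i < N) (2 * chh (rr * uu A x (blk i))).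
  by apply: eq_bigr => i _; rewrite /chh; field.
rewrite big_split /= prodr_const card_ord.
rewrite (prod_blk (fun k => chh (rr * uu A x k))) dens_eq.
have h : (2:R) ^+ N != 0 by rewrite expf_neq0 // pnatr_eq0.
congr (_ * _); by rewrite -mulrA (mulrA _^-1) mulVf // mul1r.
Qed.
End HS.

Set Implicit Arguments.
Unset Strict Implicit.
Section MAIN.
Variables (R : realType) (beta alpha : R) (N s : nat).
Hypotheses (N0 : (0 < N)%N) (s0 : (0 < s)%N) (sdN : (s %| N)%N).
Hypotheses (ha : 0 < alpha) (hb : 2 * alpha < beta).
Local Notation A := (Amat R s beta alpha).
Local Open Scope ereal_scope.

Lemma measurable_asbool (B : set (s.-tuple R)) : measurable B ->
  measurable_fun setT (fun z => `[< B z >]).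
Proof.
move=> mB; apply: (measurable_fun_bool true); rewrite setTI.
rewrite (_ : _ @^-1` _ = B) //; apply/seteqP; split => z /=.
  by move/asboolP.
by move=> Bz; apply/asboolP.
Qed.

Lemma measurable_tsub (y : s.-tuple R) : measurable_fun setT (fun z => tsub z y).
Proof.
apply/measurable_fun_tnthP => i /=.
rewrite (_ : _ \o _ = fun z => tnth z i - tnth y i)%R; last first.
  by apply/funext => z /=; rewrite tnth_mktuple.
apply: measurable_funB; last exact: measurable_cst.
exact: measurable_tnth.
Qed.

Lemma measurable_gd (y : s.-tuple R) :
  measurable_fun setT (fun z => gauss_density R s A (tsub z y)).
Proof.
rewrite (_ : (fun z => _) = fun z => KK beta alpha s * expR (- (2^-1 * qf A (tsub z y))))%R; last first.
  by apply/funext => z; rewrite gd_eq.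
apply: measurable_funM; first exact: measurable_cst.
apply: measurableT_comp => //; apply: measurableT_comp => //.
apply: measurable_funM => //.
apply: measurableT_comp (measurable_qf A) (measurable_tsub y).
Qed.

Lemma detA_gt0 : (0 < \det A)%R.
Proof. by have [] := gauss_int (Amat_sym s beta alpha) (Amat_PD ha hb). Qed.

Lemma KK_gt0 : (0 < KK beta alpha s)%R.
Proof.
rewrite /KK divr_gt0 // ?sqrtr_gt0 ?detA_gt0 //.
by rewrite exprn_gt0 // mulr_gt0 // pi_gt0.
Qed.

Lemma gauss_total : iint R s (fun x => (gauss_density R s A x)%:E) = 1.
Proof.
have [dA I] := gauss_int (Amat_sym s beta alpha) (Amat_PD ha hb).
transitivity (iint R s (fun x => (KK beta alpha s)%:E * (expR (- (2^-1 * qf A x)))%:E)).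
  by apply: iint_ext => x; rewrite gd_eq EFinM.
rewrite iintZl; [|exact: measurable_eqf|by move=> x; rewrite lee_fin expR_ge0|by rewrite lee_fin ltW // KK_gt0].
rewrite I -EFinM /KK; congr (_%:E).
have h1 : (0 < Num.sqrt (\det A))%R by rewrite sqrtr_gt0.
have h2 : (0 < Num.sqrt ((2 * (pi : R)) ^+ s))%R by rewrite sqrtr_gt0 exprn_gt0 // mulr_gt0 // pi_gt0.
by field; rewrite !gt_eqF.
Qed.

Lemma Z_gt0 : (0 < Zpart R N s beta alpha)%R.
Proof.
rewrite /Zpart (bigD1 [ffun => true]) //=.
have h1 : (0 < gibbs_weight R N s beta alpha [ffun => true])%R.
  by rewrite /gibbs_weight divr_gt0 ?expR_gt0 // exprn_gt0.
have h2 : (0 <= \sum_(i | i != [ffun => true]) gibbs_weight R N s beta alpha i)%R.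
  apply: sumr_ge0 => i _; rewrite /gibbs_weight divr_ge0 ?expR_ge0 // exprn_ge0 //.
by rewrite ltr_wpDr.
Qed.

Lemma gibbs_ge0 sg : (0 <= gibbs R N s beta alpha sg)%R.
Proof.
rewrite /gibbs divr_ge0 ?(ltW Z_gt0) //.
by rewrite /gibbs_weight divr_ge0 ?expR_ge0 // exprn_ge0.
Qed.

Lemma gibbs_sum1 : (\sum_sg gibbs R N s beta alpha sg = 1)%R.
Proof. by rewrite /gibbs -mulr_suml -/(Zpart R N s beta alpha) divff // gt_eqF // Z_gt0. Qed.

Lemma gd_ge0 z : (0 <= gauss_density R s A z)%R.
Proof. by rewrite gd_eq mulr_ge0 ?expR_ge0 // ltW // KK_gt0. Qed.

Lemma gauss_shift_total y : iint R s (fun z => (gauss_density R s A (tsub z y))%:E) = 1.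
Proof.
rewrite -(@iint_shift R s y); last 2 first.
- by apply/measurable_EFinP; exact: measurable_gd.
- by move=> z; rewrite lee_fin gd_ge0.
under iint_ext do rewrite tsub_tadd.
exact: gauss_total.
Qed.

Lemma measurable_GG : measurable_fun setT (GG beta alpha N (s:=s)).
Proof.
apply: measurable_sum => sg; apply: measurable_funM; first exact: measurable_cst.
exact: measurable_gd.
Qed.

Lemma GG_total : iint R s (fun z => (GG beta alpha N z)%:E) = 1.
Proof.
transitivity (iint R s (fun z => \sum_(sg : {ffun 'I_N -> bool})
   ((gibbs R N s beta alpha sg)%:E * (gauss_density R s A (tsub z (yy R s sg)))%:E))).
  by apply: iint_ext => z; rewrite /GG -sumEFin; apply: eq_bigr => sg _; rewrite EFinM.
rewrite iint_sum; last 2 first.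
- move=> sg; apply/measurable_EFinP; apply: measurable_funM; first exact: measurable_cst.
  exact: measurable_gd.
- by move=> sg z; rewrite -EFinM lee_fin mulr_ge0 ?gibbs_ge0 ?gd_ge0.
transitivity (\sum_(sg : {ffun 'I_N -> bool}) (gibbs R N s beta alpha sg)%:E).
  apply: eq_bigr => sg _; rewrite iintZl ?gauss_shift_total ?mule1 //.
  - by apply/measurable_EFinP; exact: measurable_gd.
  - by move=> z; rewrite lee_fin gd_ge0.
  - by rewrite lee_fin gibbs_ge0.
by rewrite sumEFin gibbs_sum1.
Qed.

Definition kap := (KK beta alpha s / Zpart R N s beta alpha)%R.

Lemma kap_gt0 : (0 < kap)%R.
Proof. by rewrite /kap divr_gt0 ?KK_gt0 ?Z_gt0. Qed.

Lemma dens_GG z : dens R N s beta alpha z = (kap^-1 * GG beta alpha N z)%R.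
Proof.
rewrite (GG_eq beta alpha N0 s0 sdN) -/kap mulrA mulVf ?mul1r //.
by rewrite gt_eqF // kap_gt0.
Qed.

Lemma zN_eq : zN R N s beta alpha = (kap^-1)%:E.
Proof.
rewrite /zN.
transitivity (iint R s (fun z => (kap^-1)%:E * (GG beta alpha N z)%:E)).
  by apply: iint_ext => z; rewrite dens_GG EFinM.
rewrite iintZl ?GG_total ?mule1 //.
- by apply/measurable_EFinP; exact: measurable_GG.
- move=> z; rewrite lee_fin /GG; apply: sumr_ge0 => sg _.
  by rewrite mulr_ge0 ?gibbs_ge0 ?gd_ge0.
- by rewrite lee_fin invr_ge0 ltW // kap_gt0.
Qed.

Lemma GG_ge0 (z : s.-tuple R) : (0 <= GG beta alpha N z)%R.
Proof. by rewrite /GG; apply: sumr_ge0 => sg _; rewrite mulr_ge0 ?gibbs_ge0 ?gd_ge0. Qed.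

Lemma conv_eq (B : set (s.-tuple R)) : measurable B ->
  conv_law R N s beta alpha B =
  iint R s (fun z => if `[< B z >] then (GG beta alpha N z)%:E else 0).
Proof.
move=> mB.
pose h (sg : {ffun 'I_N -> bool}) z :=
  if `[< B z >] then (gauss_density R s A (tsub z (yy R s sg)))%:E else 0.
have mh : forall sg, measurable_fun setT (h sg).
  move=> sg; apply: measurable_fun_ifT.
  - exact: measurable_asbool.
  - by apply/measurable_EFinP; exact: measurable_gd.
  - exact: measurable_cst.
have h0 : forall sg z, 0 <= h sg z.
  by move=> sg z; rewrite /h; case: ifP => // _; rewrite lee_fin gd_ge0.
transitivity (\sum_(sg : {ffun 'I_N -> bool}) ((gibbs R N s beta alpha sg)%:E * iint R s (h sg))).
  apply: eq_bigr => sg _; congr (_ * _).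
  rewrite /gauss_meas /iint_on -(@iint_shift R s (yy R s sg) (h sg)) //.
  by apply: iint_ext => x; rewrite /h tsub_tadd.
transitivity (\sum_(sg : {ffun 'I_N -> bool}) iint R s (fun z => (gibbs R N s beta alpha sg)%:E * h sg z)).
  by apply: eq_bigr => sg _; rewrite iintZl // lee_fin gibbs_ge0.
rewrite -iint_sum; last 2 first.
- by move=> sg; apply: emeasurable_funM => //; exact: measurable_cst.
- by move=> sg z; rewrite mule_ge0 // lee_fin gibbs_ge0.
apply: iint_ext => z; rewrite /h; case: ifP => _.
  by rewrite /GG -sumEFin; apply: eq_bigr => sg _; rewrite EFinM.
by rewrite big1 // => sg _; rewrite mule0.
Qed.

Theorem main_s :
  (0 < zN R N s beta alpha < +oo)%E /\
  forall B : set (s.-tuple R), measurable B ->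
    conv_law R N s beta alpha B =
    (iint_on R s B (fun x => (dens R N s beta alpha x)%:E)
       * ((fine (zN R N s beta alpha))^-1)%:E)%E.
Proof.
have k0 := kap_gt0.
rewrite zN_eq; split.
  by rewrite lte_fin invr_gt0 k0 ltry.
move=> B mB; rewrite conv_eq // /= invrK /iint_on.
transitivity (iint R s (fun z => (kap^-1)%:E * (if `[< B z >] then (GG beta alpha N z)%:E else 0)) * kap%:E).
  rewrite iintZl.
  - by rewrite muleC muleA -EFinM mulfV ?gt_eqF // mul1e.
  - apply: measurable_fun_ifT.
    + exact: measurable_asbool.
    + by apply/measurable_EFinP; exact: measurable_GG.
    + exact: measurable_cst.
  - by move=> z; case: ifP => // _; rewrite lee_fin GG_ge0.
  - by rewrite lee_fin invr_ge0 ltW.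
congr (_ * _); apply: iint_ext => z; case: ifP => _.
  by rewrite dens_GG EFinM.
by rewrite mule0.
Qed.
End MAIN.


Theorem lemma4p1 (R : realType) (beta alpha : R) (sN : nat -> nat)
  (halpha : 0 < alpha) (hbeta : 2 * alpha < beta)
  (hs_pos : forall N : nat, (0 < N)%N -> (0 < sN N)%N)
  (hs_div : forall N : nat, (0 < N)%N -> (sN N %| N)%N)
  (hs_mono : forall N M : nat, (0 < N)%N -> (N <= M)%N -> (sN N <= sN M)%N)
  (N : nat) (hN : (0 < N)%N) :
  (0 < zN R N (sN N) beta alpha < +oo)%E /\
  forall B : set ((sN N).-tuple R), measurable B ->
    conv_law R N (sN N) beta alpha B =
    (iint_on R (sN N) B (fun x => (dens R N (sN N) beta alpha x)%:E)
       * ((fine (zN R N (sN N) beta alpha))^-1)%:E)%E.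
Proof.
exact: (main_s hN (hs_pos N hN) (hs_div N hN) halpha hbeta).
Qed.
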